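(* Let $r,s,t,\ell,m$ be integers with $1 \le t \le \ell \le m$, $1 \le r < \ell$ and $1 \le s \le t$. Then $$\mathfrak w_r^{(s)}(t;\ell,m)=q^t\,\mathfrak w^{(s)}_r(t;\ell-1,m)+(q^m-q^{t-1})\,\mathfrak w^{(s)}_r(t-1;\ell-1,m)$$ and $$\mathfrak w_r(t;\ell,m)=q^t\,\mathfrak w_r(t;\ell-1,m)+(q^m-q^{t-1})\,\mathfrak w_r(t-1;\ell-1,m).$$
   Context: $q$ is a prime power. For an $a\times b$ matrix $M=(m_{ij})$ over $\mathbb{F}_q$ and $1\le r\le a$, $\tau_r(M)=m_{11}+\cdots+m_{rr}$ and $\underline{M}_r$ is the $r\times b$ matrix of the first $r$ rows of $M$. For integers $t\ge 0$ and $s\ge 1$, $\mathfrak w_r(t;a,b)$ is the number of $a\times b$ matrices $M$ over $\mathbb{F}_q$ with $\mathrm{rk}(M)=t$ and $\tau_r(M)\ne0$, and $\mathfrak w^{(s)}_r(t;a,b)$ is the number of such matrices that additionally satisfy $\mathrm{rk}(\underline{M}_r)=s$ (these counts are $0$ when no such matrices exist, e.g. when $t=0$ or $t>\min(a,b)$). *)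

(* Defs.v *)
From HB Require Import structures.
From mathcomp Require Import all_boot all_order all_algebra all_fingroup all_field.
Set Implicit Arguments. Unset Strict Implicit. Unset Printing Implicit Defensive.
Import GRing.Theory.
Local Open Scope ring_scope.

Definition tau (F : finFieldType) (r : nat) (a b : nat) (M : 'M[F]_(a, b)) : F :=
  \sum_(i : 'I_a) \sum_(j : 'I_b)
     (if ((i : nat) == (j : nat)) && (i < r)%N then M i j else 0).

(* The r x b matrix of the first r rows of M (meaningful for r <= a). *)
Definition first_rows (F : finFieldType) (r : nat) (a b : nat) (M : 'M[F]_(a, b))
  : 'M[F]_(r, b) :=
  \matrix_(i < r, j < b)
     (match @insub nat (fun k => k < a)%N 'I_a (val i) with
      | Some i' => M i' j
      | None => 0
      end).

Definition wcount (F : finFieldType) (r t a b : nat) : nat :=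
  #|[set M : 'M[F]_(a, b) | (\rank M == t) && (tau r M != 0)]|.

Definition wcount_s (F : finFieldType) (r s t a b : nat) : nat :=
  #|[set M : 'M[F]_(a, b) |
       [&& \rank M == t, tau r M != 0 & \rank (first_rows r M) == s]]|.

(* Main.v *)
Require Import Defs.
From HB Require Import structures.
From mathcomp Require Import all_boot all_order all_algebra all_fingroup all_field.
From mathcomp Require Import mxabelem.
Set Implicit Arguments. Unset Strict Implicit. Unset Printing Implicit Defensive.
Import GRing.Theory.
Local Open Scope ring_scope.

Section Aux.
Variable F : finFieldType.

Definition ent a b (M : 'M[F]_(a, b)) (k : nat) (j : 'I_b) : F :=
  match @insub nat (fun k => k < a)%N 'I_a k with
  | Some i' => M i' j | None => 0 end.

Lemma entE a b (M : 'M[F]_(a, b)) (i : 'I_a) j : ent M i j = M i j.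
Proof. by rewrite /ent valK. Qed.

Lemma first_rowsE a b r (M : 'M[F]_(a, b)) (i : 'I_r) j :
  first_rows r M i j = ent M i j.
Proof. by rewrite mxE. Qed.

Lemma ent_first a b n (M : 'M[F]_(a, b)) k j : (k < n)%N ->
  ent (first_rows n M) k j = ent M k j.
Proof.
by move=> kn; rewrite /ent insubT /= first_rowsE.
Qed.

Lemma tauE a b r (M : 'M[F]_(a, b)) : (r <= a)%N ->
  tau r M = \sum_(i < r) \sum_(j : 'I_b) (if (i == j :> nat) then ent M i j else 0).
Proof.
move=> ra.
rewrite (big_ord_widen_cond _ xpredT (fun i : nat => \sum_(j : 'I_b) (if (i == j :> nat) then ent M i j else 0)) ra).
rewrite big_mkcond /tau; apply: eq_bigr => i _ /=.
case: ltnP => ir; last first.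
  by apply: big1 => j _; rewrite andbF.
by apply: eq_bigr => j _; rewrite andbT entE.
Qed.

Lemma tau_first a b r n (M : 'M[F]_(a, b)) : (r <= n)%N -> (n <= a)%N ->
  tau r (first_rows n M) = tau r M.
Proof.
move=> rn na; rewrite !tauE //; last exact: leq_trans na.
apply: eq_bigr => i _; apply: eq_bigr => j _.
by rewrite ent_first // (leq_trans (ltn_ord i) rn).
Qed.

Lemma first_first a b r n (M : 'M[F]_(a, b)) : (r <= n)%N ->
  first_rows r (first_rows n M) = first_rows r M.
Proof.
move=> rn; apply/matrixP => i j; rewrite !first_rowsE ent_first //.
exact: leq_trans (ltn_ord i) rn.
Qed.

End Aux.
Section Step.
Variable F : finFieldType.
Variables n m : nat.

Definition gl (x : 'M[F]_(n, m) * 'rV[F]_m) : 'M[F]_(n.+1, m) :=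
  castmx (addn1 n, erefl m) (col_mx x.1 x.2).

Definition fl (M : 'M[F]_(n.+1, m)) : 'M[F]_(n, m) * 'rV[F]_m :=
  (first_rows n M, row ord_max M).

Lemma flK : cancel gl fl.
Proof.
case=> A v; rewrite /fl /gl /=; congr pair; apply/matrixP => i j.
  rewrite first_rowsE /ent insubT; first exact: ltnW (ltn_ord i).
  move=> h; rewrite castmxE /= cast_ord_id.
  have -> : cast_ord (esym (addn1 n)) (Sub (val i) h) = lshift 1 i.
    by apply: val_inj.
  by rewrite col_mxEu.
rewrite mxE castmxE /= cast_ord_id.
have -> : cast_ord (esym (addn1 n)) ord_max = rshift n i.
  by apply: val_inj; rewrite /= ord1 addn0.
by rewrite col_mxEd.
Qed.

Lemma glK : cancel fl gl.
Proof.
move=> M; apply/matrixP => i j; rewrite /gl /fl castmxE /= cast_ord_id.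
rewrite mxE; case: splitP => k /= hk.
  rewrite first_rowsE /ent insubT; first exact: ltnW (ltn_ord k).
  by move=> h; congr (M _ j); apply: val_inj.
rewrite mxE; congr (M _ j); apply: val_inj => /=.
by rewrite ord1 addn0 in hk; rewrite hk.
Qed.

Lemma rank_gl (A : 'M[F]_(n, m)) (v : 'rV[F]_m) :
  \rank (gl (A, v)) = (\rank A + ~~ (v <= A)%MS)%N.
Proof.
rewrite /gl eqmx_cast /= -addsmxE.
case: (boolP (v <= A)%MS) => h.
  by rewrite (eqmx_rank (introT eqmxP (addsmx_idPl h))) addn0.
have hv : \rank v = 1%N.
  rewrite rank_rV; case: eqP => // v0; move: h; rewrite v0 sub0mx //.
have hc : \rank (A :&: v)%MS = 0%N.
  have [le1 eqC] := mxrank_leqif_sup (capmxSr A v).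
  move: le1; rewrite hv leq_eqVlt ltnS leqn0 => /orP[/eqP e|/eqP //].
  have : (v <= A :&: v)%MS by rewrite -eqC e hv.
  by move=> /submx_trans /(_ (capmxSl A v)) h'; rewrite h' in h.
have := mxrank_sum_cap A v; rewrite hc hv addn0 => ->; done.
Qed.

Lemma inner_sum (A : 'M[F]_(n, m)) (t : nat) :
  (\sum_(v : 'rV[F]_m) (if \rank (gl (A, v)) == t then 1 else 0))%N =
  ((\rank A == t) * #|F| ^ \rank A + (\rank A + 1 == t) * (#|F| ^ m - #|F| ^ \rank A))%N.
Proof.
rewrite (bigID (fun v => v \in rowg A)) /=.
have h1 : (\sum_(v | true && (v \in rowg A)) (if \rank (gl (A, v)) == t then 1 else 0))%N
   = (#|rowg A| * (\rank A == t))%N.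
  rewrite -sum_nat_const; apply: eq_big => // v.
  by move=> /= hv; rewrite rank_gl; move: hv; rewrite inE => ->; rewrite addn0; case: eqP.
have h2 : (\sum_(v | true && (v \notin rowg A)) (if \rank (gl (A, v)) == t then 1 else 0))%N
   = (#|~: rowg A| * (\rank A + 1 == t))%N.
  rewrite -sum_nat_const; apply: eq_big => [v|v]; first by rewrite /= in_setC.
  by move=> /= hv; rewrite rank_gl; move: hv; rewrite inE => /negbTE ->; case: eqP.
rewrite h1 h2 card_rowg.
have -> : #|~: rowg A| = (#|F| ^ m - #|F| ^ \rank A)%N.
  by have := cardsC (rowg A); rewrite card_mx mul1n card_rowg => <-; rewrite addKn.
by rewrite mulnC [X in (_ + X)%N]mulnC.
Qed.

Lemma step (t : nat) (Q : pred 'M[F]_(n, m)) : (1 <= t)%N ->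
  #|[set M : 'M[F]_(n.+1, m) | (\rank M == t) && Q (first_rows n M)]| =
  (#|F| ^ t * #|[set A | (\rank A == t) && Q A]|
   + (#|F| ^ m - #|F| ^ t.-1) * #|[set A | (\rank A == t.-1) && Q A]|)%N.
Proof.
move=> t1.
have -> : #|[set M : 'M[F]_(n.+1, m) | (\rank M == t) && Q (first_rows n M)]| =
   #|[set x | (\rank (gl x) == t) && Q x.1]|.
  rewrite -(card_imset _ (can_inj glK)); apply: eq_card => x.
  rewrite [RHS]inE; apply/imsetP/idP => [[M hM ->]|hx].
    by rewrite inE in hM; rewrite glK.
  exists (gl x); last by rewrite flK.
  have e : first_rows n (gl x) = x.1 := congr1 fst (flK x).
  by rewrite inE e.
transitivity (\sum_(A : 'M[F]_(n, m)) \sum_(v : 'rV[F]_m)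
   (if (\rank (gl (A, v)) == t) && Q A then 1 else 0))%N.
  rewrite pair_big /= -sum1dep_card big_mkcond; apply: eq_big => //; by case.
rewrite -!sum1dep_card !(big_mkcond (fun A => _ && _)) !big_distrr -big_split /=.
apply: eq_bigr => A _.
case: (boolP (Q A)) => hQ; last first.
  by rewrite big1 ?andbF ?muln0 // => v _; rewrite andbF.
under eq_bigr => v _ do rewrite andbT.
rewrite inner_sum !andbT.
case: t t1 => // t _ /=.
case: (eqVneq (\rank A) t.+1) => [->|ne].
  by rewrite addn1 eqSS (gtn_eqF (ltnSn t)) /= mul1n mul0n muln0 muln1 !addn0.
rewrite addn1 eqSS /= mul0n add0n muln0 add0n.
by case: eqP => [->|_]; rewrite /= ?mul1n ?muln1 ?mul0n ?muln0.
Qed.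

End Step.

Theorem mainTheorem14 (F : finFieldType) (r s t l m : nat) :
  (1 <= t)%N -> (t <= l)%N -> (l <= m)%N -> (1 <= r)%N -> (r < l)%N ->
  (1 <= s)%N -> (s <= t)%N ->
  wcount_s F r s t l m =
    (#|F| ^ t * wcount_s F r s t l.-1 m
     + (#|F| ^ m - #|F| ^ t.-1) * wcount_s F r s t.-1 l.-1 m)%N
  /\
  wcount F r t l m =
    (#|F| ^ t * wcount F r t l.-1 m
     + (#|F| ^ m - #|F| ^ t.-1) * wcount F r t.-1 l.-1 m)%N.
Proof.
move=> t1 _ _ _ rl _ _.
case: l rl => // n rn /=; rewrite ltnS in rn.
split.
  rewrite /wcount_s.
  have := step (fun A : 'M[F]_(n, m) => (tau r A != 0) && (\rank (first_rows r A) == s)) t1.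
  have -> : [set M : 'M[F]_(n.+1, m) | (\rank M == t) &&
      ((fun A : 'M[F]_(n, m) => (tau r A != 0) && (\rank (first_rows r A) == s)) (first_rows n M))]
    = [set M | [&& \rank M == t, tau r M != 0 & \rank (first_rows r M) == s]].
    by apply/setP => M; rewrite !inE /= tau_first // first_first.
  by [].
rewrite /wcount.
have := step (fun A : 'M[F]_(n, m) => (tau r A != 0)) t1.
have -> : [set M : 'M[F]_(n.+1, m) | (\rank M == t) &&
    ((fun A : 'M[F]_(n, m) => (tau r A != 0)) (first_rows n M))]
  = [set M | (\rank M == t) && (tau r M != 0)].
  by apply/setP => M; rewrite !inE /= tau_first.
by [].
Qed.
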